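(* Let $\Gamma$ be a distance-regular graph with diameter $D\ge 3$ and valency $k$, and assume $a_i=0$ for $0\le i\le D-2$ and $a_{D-1}\neq 0$. Let $M$ be the $D\times D$ tridiagonal matrix with rows and columns indexed by $0,1,\dots,D-1$, whose diagonal is $(0,0,\dots,0,k-c_{D-1})$, whose superdiagonal entries are $M_{i,i+1}=b_i$ ($0\le i\le D-2$) and whose subdiagonal entries are $M_{i,i-1}=c_i$ ($1\le i\le D-1$). Then: (i) for every $\theta\in\mathbb{R}$ the pair $\theta,k$ is tight; (ii) for every real number $\theta$ that is an eigenvalue of $M$, the pair $\theta,-k$ is tight; (iii) $\Gamma$ has no further tight pairs, i.e. if $\theta,\theta'\in\mathbb{R}$ form a tight pair then either one of them equals $k$, or one of them equals $-k$ and the other is an eigenvalue of $M$.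
   Context: $\Gamma$ is a finite connected undirected graph without loops or multiple edges, distance-regular with diameter $D$, intersection numbers $a_i,b_i,c_i$ ($c_0=0$, $b_D=0$, $c_1=1$), valency $k=b_0$, and $c_i+a_i+b_i=k$ for $0\le i\le D$. For $\theta\in\mathbb{R}$, the pseudo cosine sequence for $\theta$ is the sequence of reals $\sigma_0,\dots,\sigma_D$ with $\sigma_0=1$ and $c_i\sigma_{i-1}+a_i\sigma_i+b_i\sigma_{i+1}=\theta\sigma_i$ for $0\le i\le D-1$. Two pseudo cosine sequences $\sigma_i$, $\rho_i$ form a tight pair if $(\sigma_i\rho_i)_{i=0}^D$ is a pseudo cosine sequence; reals $\theta,\theta'$ form a tight pair if their pseudo cosine sequences do. *)

(* Defs.v *)
From HB Require Import structures.
From mathcomp Require Import all_boot all_order all_algebra.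
From mathcomp Require Import reals.
Set Implicit Arguments. Unset Strict Implicit. Unset Printing Implicit Defensive.
Import Order.TTheory GRing.Theory Num.Theory.

Section Graph.
Variables (T : finType) (adj : rel T).

Fixpoint within (n : nat) (x y : T) : bool :=
  if n is n'.+1 then within n' x y || [exists z, within n' x z && adj z y]
  else x == y.

(* graph distance (correct for connected graphs) *)
Definition gdist (x y : T) : nat :=
  find (fun n => within n x y) (iota 0 #|T|.+1).

Definition gconnected : Prop := forall x y : T, within #|T| x y.

Definition distance_regular (D : nat) (a b c : nat -> nat) : Prop :=
  [/\ symmetric adj, irreflexive adj, gconnected,
      (forall x y, gdist x y <= D)%N /\ (exists x y, gdist x y = D) &
      forall x y : T, let i := gdist x y in
        [/\ c i = #|[set z | adj y z & (gdist x z).+1 == i]|,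
            a i = #|[set z | adj y z & gdist x z == i]| &
            b i = #|[set z | adj y z & gdist x z == i.+1]| ] ].
End Graph.

Local Open Scope ring_scope.

Section PCS.
Variables (R : realType) (D : nat) (a b c : nat -> nat).

(* sigma is the pseudo cosine sequence for theta (only indices 0..D matter) *)
Definition is_pcs (theta : R) (sigma : nat -> R) : Prop :=
  sigma 0%N = 1 /\
  forall i : nat, (i < D)%N ->
    (c i)%:R * sigma i.-1 + (a i)%:R * sigma i + (b i)%:R * sigma i.+1
    = theta * sigma i.

Definition tight_pair (theta theta' : R) : Prop :=
  exists (sigma rho : nat -> R) (eta : R),
    [/\ is_pcs theta sigma, is_pcs theta' rho &
        is_pcs eta (fun i => sigma i * rho i)].

Definition Mtri : 'M[R]_D :=
  \matrix_(i < D, j < D)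
    if (j : nat) == i.+1 then (b i)%:R
    else if (i : nat) == j.+1 then (c i)%:R
    else if ((i : nat) == j) && ((i : nat) == D.-1) then (b 0%N)%:R - (c D.-1)%:R
    else 0.
End PCS.

(* Main.v *)
Require Import Defs.
From HB Require Import structures.
From mathcomp Require Import all_boot all_order all_algebra.
From mathcomp Require Import reals.
From mathcomp Require Import zify ring lra.
Import Order.TTheory GRing.Theory Num.Theory.
Set Implicit Arguments. Unset Strict Implicit.

Section G.
Variables (T : finType) (adj : rel T).
Hypothesis conn : gconnected adj.
Hypothesis sym : symmetric adj.
Hypothesis irr : irreflexive adj.

Lemma within_mono n m x y : (n <= m)%N -> within adj n x y -> within adj m x y.
Proof.
move=> /subnK <-; elim: (m - n)%N => [|d IH] //= H.
by rewrite IH.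
Qed.

Lemma gdist_le n x y : within adj n x y -> (gdist adj x y <= n)%N.
Proof.
move=> H; rewrite /gdist.
case: (leqP n #|T|) => hn.
  have : (n < size (iota 0 #|T|.+1))%N by rewrite size_iota.
  move=> hs.
  have Hh : has (fun n => within adj n x y) (iota 0 #|T|.+1).
    by apply/hasP; exists n => //; rewrite mem_iota.
  rewrite leqNgt; apply/negP => hlt.
  have := @before_find _ 0%N (fun n => within adj n x y) (iota 0 #|T|.+1) n hlt.
  by rewrite nth_iota // H.
apply: (leq_trans _ (ltnW hn)).
have Hh : has (fun n => within adj n x y) (iota 0 #|T|.+1).
  by apply/hasP; exists #|T|; [rewrite mem_iota /= add0n ltnSn | apply: conn].
rewrite leqNgt; apply/negP => hlt.
have := @before_find _ 0%N (fun n => within adj n x y) (iota 0 #|T|.+1) #|T| hlt.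
by rewrite nth_iota // conn.
Qed.

Lemma gdist_within x y : within adj (gdist adj x y) x y.
Proof.
have Hh : has (fun n => within adj n x y) (iota 0 #|T|.+1).
  by apply/hasP; exists #|T|; [rewrite mem_iota /= add0n ltnSn | apply: conn].
have := nth_find 0%N Hh.
have hf := Hh; rewrite has_find size_iota in hf.
by rewrite nth_iota.
Qed.

Lemma gdist0 x : gdist adj x x = 0%N.
Proof. by apply/eqP; rewrite -leqn0; apply: (gdist_le (n:=0)) => /=. Qed.

Lemma gdist_eq0 x y : gdist adj x y = 0%N -> x = y.
Proof. by move=> H; have := gdist_within x y; rewrite H /= => /eqP. Qed.

Lemma gdist_adjS x y z : adj y z -> (gdist adj x z <= (gdist adj x y).+1)%N.
Proof.
move=> a; apply: gdist_le => /=; apply/orP; right.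
by apply/existsP; exists y; rewrite gdist_within a.
Qed.

Lemma gdist1 y z : (gdist adj y z == 1%N) = adj y z.
Proof.
apply/idP/idP.
  move=> /eqP H; have := gdist_within y z; rewrite H /=.
  case/orP => [/eqP E|]; first by move: H; rewrite E gdist0.
  by case/existsP => w /andP [/eqP -> ->].
move=> a; rewrite eqn_leq; apply/andP; split.
  by have := gdist_adjS y a; rewrite gdist0.
rewrite lt0n; apply/negP => /eqP /gdist_eq0 E.
by move: a; rewrite E irr.
Qed.

Lemma gdist_pred x y n : gdist adj x y = n.+1 ->
  exists z, adj z y /\ gdist adj x z = n.
Proof.
move=> H; have := gdist_within x y; rewrite H /=.
case/orP => [/gdist_le|]; first by rewrite H ltnn.
case/existsP => z /andP [w a]; exists z; split => //.
apply/eqP; rewrite eqn_leq gdist_le //=.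
have := gdist_adjS x a; rewrite H ltnS //.
Qed.

End G.

Lemma sum_bool (T : finType) (A P : pred T) :
  (\sum_(z | A z) (P z : nat) = #|[set z | A z && P z]|)%N.
Proof.
rewrite -sum1dep_card big_mkcondr /=; apply: eq_bigr => z _; by case: (P z).
Qed.

Section DRG.
Variables (T : finType) (adj : rel T) (D : nat) (a b c : nat -> nat).
Hypothesis H : distance_regular adj D a b c.

Let sym : symmetric adj. Proof. by case: H. Qed.
Let irr : irreflexive adj. Proof. by case: H. Qed.
Let conn : gconnected adj. Proof. by case: H. Qed.
Let num x y := match H with And5 _ _ _ _ h => h x y end.

Lemma drg_c0 : c 0 = 0%N.
Proof.
case: H => _ _ _ [_ [x [_ _]]] h.
have [hc _ _] := h x x; rewrite gdist0 // in hc; rewrite hc.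
apply/eqP; rewrite cards_eq0; apply/eqP/setP => z; rewrite !inE; by case: (adj x z).
Qed.

Lemma drg_deg y : #|[set z | adj y z]| = b 0.
Proof.
have := num y y; rewrite /= gdist0 //; case=> _ _ ->.
apply: eq_card => z; rewrite !inE (gdist1 conn irr); by case: (adj y z).
Qed.

Lemma drg_exists i : (i <= D)%N -> exists x y, gdist adj x y = i.
Proof.
case: H => _ _ _ [_ [x [w hw]]] _ hi.
exists x.
have : forall m, (m <= D)%N -> exists z, gdist adj x z = (D - m)%N.
  elim => [|m IH] hm; first by exists w; rewrite subn0.
  have [z hz] := IH (ltnW hm).
  have hz' : gdist adj x z = (D - m.+1).+1 by rewrite hz; lia.
  have [y [_ hy]] := gdist_pred conn hz'.
  by exists y.
move=> /(_ (D - i)%N (leq_subr _ _)) [z hz]; exists z; rewrite hz; lia.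
Qed.

Lemma drg_bpos i : (i < D)%N -> b i <> 0%N.
Proof.
move=> hi; have [x [z hz]] := drg_exists hi.
have [y [ayz hy]] := gdist_pred conn hz.
have := num x y; rewrite /= hy; case=> _ _ ->.
apply/eqP; rewrite cards_eq0; apply/eqP => /setP /(_ z).
by rewrite !inE hz eqxx ayz.
Qed.

Lemma drg_sum i : (i <= D)%N -> (c i + a i + b i = b 0)%N.
Proof.
move=> hi; have [x [y hy]] := drg_exists hi.
have := num x y; rewrite /= hy; case=> hc ha hb.
rewrite hc ha hb -(drg_deg y) -!sum_bool -big_split -big_split -sum1dep_card /=.
apply: eq_bigr => z ayz.
have h1 := gdist_adjS conn x ayz.
rewrite sym in ayz.
have h3 := gdist_adjS conn x ayz.
rewrite hy in h1 h3.
by do ?[case: eqP => ?]; lia.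
Qed.

Lemma drg_c1 : (1 <= D)%N -> c 1 <> 0%N.
Proof.
move=> h1; have [x [y hy]] := drg_exists h1.
have [z [azy hz]] := gdist_pred conn hy.
have := num x y; rewrite /= hy; case=> -> _ _.
apply/eqP; rewrite cards_eq0; apply/eqP => /setP /(_ z).
by rewrite !inE hz eqxx sym azy.
Qed.

End DRG.

Local Open Scope ring_scope.

Lemma pointwise (R : comRingType) (n i j : nat) (f : nat -> R) (B C E : R) :
  f j * (if j == i.+1 then B else if i == j.+1 then C
         else if (i == j) && (i == n) then E else 0) =
  (if (0 < i)%N then (if j == i.-1 then C * f i.-1 else 0) else 0) +
  (if j == i then (if i == n then E * f i else 0) else 0) +
  (if j == i.+1 then B * f i.+1 else 0).
Proof.
case: (j =P i.+1) => [->|h1].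
  have -> : (i.+1 == i) = false by apply/eqP; lia.
  have -> : (if (0 < i)%N then if i.+1 == i.-1 then C * f i.-1 else 0 else 0) = 0.
    by case: ifP => // hi; rewrite ifF //; apply/eqP; lia.
  by rewrite ?add0r mulrC.
rewrite addr0.
case: (i =P j.+1) => [->|h2] /=.
  have -> : (j == j.+1) = false by apply/eqP; lia.
  by rewrite eqxx addr0 mulrC.
case: (j =P i) => [->|h3].
  rewrite eqxx andTb.
  have -> : (if (0 < i)%N then if i == i.-1 then C * f i.-1 else 0 else 0) = 0.
    by case: ifP => // hi; rewrite ifF //; apply/eqP; lia.
  by case: (i == n); rewrite ?mulr0 ?add0r // mulrC.
have -> : (i == j) = false by apply/eqP; lia.
rewrite mulr0 addr0.
by case: ifP => // hi; rewrite ifF //; apply/eqP; lia.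
Qed.

Lemma sum_if (R : nmodType) n m (F : nat -> R) :
  \sum_(j < n) (if (j : nat) == m then F j else 0) = if (m < n)%N then F m else 0.
Proof. by rewrite -big_mkcond big_ord1_eq. Qed.

Lemma rowsum (R : realType) D (b c : nat -> nat) (i : 'I_D) (f : nat -> R) :
  \sum_(j < D) f j * Mtri R D b c i j =
  (if (0 < i)%N then (c i)%:R * f i.-1 else 0) +
  (if (i : nat) == D.-1 then ((b 0%N)%:R - (c D.-1)%:R) * f i else 0) +
  (if (i.+1 < D)%N then (b i)%:R * f i.+1 else 0).
Proof.
under eq_bigr => j _ do rewrite mxE pointwise.
rewrite !big_split /=.
rewrite (sum_if D i.+1 (fun _ => (b i)%:R * f i.+1)).
rewrite (sum_if D i (fun _ => if (i : nat) == D.-1 then ((b 0%N)%:R - (c D.-1)%:R) * f i else 0)) ltn_ord.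
congr (_ + _ + _).
case: ifP => hi; last by rewrite big1.
by rewrite (sum_if D i.-1 (fun _ => (c i)%:R * f i.-1)) ifT //; have := ltn_ord i; lia.
Qed.

Lemma eig_tr (F : fieldType) n (g : 'M[F]_n) x : eigenvalue g^T x = eigenvalue g x.
Proof.
rewrite /eigenvalue /eigenspace !kermx_eq0 /row_free -[in RHS]mxrank_tr.
by rewrite linearB /= tr_scalar_mx.
Qed.

Section Alg.
Variables (R : realType) (D : nat) (a b c : nat -> nat).
Hypothesis hD : (3 <= D)%N.
Hypothesis ha0 : forall i, (i <= D - 2)%N -> a i = 0%N.
Hypothesis haD : a D.-1 <> 0%N.
Hypothesis hc0 : c 0%N = 0%N.
Hypothesis hc1 : c 1%N <> 0%N.
Hypothesis hb : forall i, (i < D)%N -> b i <> 0%N.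
Hypothesis hs : forall i, (i < D)%N -> (c i + a i + b i = b 0)%N.

Notation k := ((b 0%N)%:R : R).
Notation pcs := (@is_pcs R D a b c).

Lemma bR i : (i < D)%N -> (b i)%:R != 0 :> R.
Proof. by move=> hi; rewrite pnatr_eq0; apply/eqP; apply: hb. Qed.

Lemma sR i : (i < D)%N -> (c i)%:R + (a i)%:R + (b i)%:R = k.
Proof. by move=> hi; rewrite -!natrD hs. Qed.

Lemma pcs_ext th f g : pcs th f -> (forall i, f i = g i) -> pcs th g.
Proof.
move=> [h0 h] e; split; first by rewrite -e.
by move=> i hi; rewrite -!e h.
Qed.

Fixpoint aux (th : R) n : R * R :=
  if n is m.+1 then
    let p := aux th m in
    (p.2, (th * p.2 - (c m)%:R * p.1 - (a m)%:R * p.2) / (b m)%:R)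
  else (1, 1).

Lemma pcs_exists th : exists s : nat -> R, pcs th s.
Proof.
exists (fun n => (aux th n).2); split => // i hi.
have h1 : forall n, (aux th n).1 = (aux th n.-1).2 by case.
rewrite /= h1 mulrCA mulfV ?bR // mulr1; ring.
Qed.

Lemma part1 th : tight_pair D a b c th k.
Proof.
have [s hs'] := pcs_exists th.
exists s, (fun _ => 1), th; split => //.
  split => // i hi; by rewrite !mulr1 sR.
by apply: pcs_ext hs' _ => i; rewrite mulr1.
Qed.


Definition reig (th : R) (f : nat -> R) := forall i, (i < D)%N ->
  (c i)%:R * f i.-1 + (if i == D.-1 then (k - (c D.-1)%:R) * f i else 0) +
  (if (i.+1 < D)%N then (b i)%:R * f i.+1 else 0) = th * f i.

Lemma cguard i (x : R) : (if (0 < i)%N then (c i)%:R * x else 0) = (c i)%:R * x.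
Proof. by case: i => [|i] //=; rewrite hc0 mul0r. Qed.

Lemma rowmulT n (A : 'M[R]_n) (f : nat -> R) i :
  ((\row_(j < n) f j) *m A^T) 0 i = \sum_(j < n) f j * A i j.
Proof. by rewrite !mxE; apply: eq_bigr => j _; rewrite !mxE. Qed.

Lemma reig_row th f :
  reig th f <-> (\row_(j < D) f j) *m (Mtri R D b c)^T = th *: \row_(j < D) f j.
Proof.
split.
  move=> h; apply/rowP => i; rewrite rowmulT [in RHS]mxE [in RHS]mxE.
  by rewrite rowsum cguard h.
move=> /rowP h i hi; have := h (Ordinal hi); rewrite rowmulT [in RHS]mxE [in RHS]mxE.
by move=> <-; rewrite rowsum cguard.
Qed.

Lemma eig_of_reig th f : reig th f -> f 0%N != 0 -> eigenvalue (Mtri R D b c) th.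
Proof.
move=> /reig_row h f0; rewrite -eig_tr; apply/eigenvalueP.
exists (\row_(j < D) f j) => //.
apply/negP => /eqP /rowP /(_ (Ordinal (leq_trans (isT : (0 < 3)%N) hD))).
by rewrite !mxE; apply/eqP.
Qed.

Lemma pcs_reig th f : pcs th f -> f D = f D.-1 -> reig th f.
Proof.
move=> [_ h] hD1 i hi.
have := h i hi.
case: (ltnP i.+1 D) => hi2.
  rewrite ifF; last by apply/eqP; lia.
  by rewrite ha0 ?addr0 ?mul0r ?addr0 //; lia.
have -> : i = D.-1 by lia.
rewrite eqxx addr0 -(sR (i:=D.-1)); last by lia.
have -> : D.-1.+1 = D by lia.
rewrite hD1 => <-; ring.
Qed.

Lemma reig_pcs th f : reig th f -> forall i, (i < D)%N ->
  let g := fun j => f (minn j D.-1) in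
  (c i)%:R * g i.-1 + (a i)%:R * g i + (b i)%:R * g i.+1 = th * g i.
Proof.
move=> h i hi g; have := h i hi; rewrite /g.
have -> : minn i D.-1 = i by apply/minn_idPl; lia.
have -> : minn i.-1 D.-1 = i.-1 by apply/minn_idPl; lia.
case: (ltnP i.+1 D) => hi2.
  have -> : minn i.+1 D.-1 = i.+1 by apply/minn_idPl; lia.
  rewrite ifF; last by apply/eqP; lia.
  by rewrite ha0 ?addr0 ?mul0r ?addr0 //; lia.
have E : i = D.-1 by lia.
have -> : minn i.+1 D.-1 = i by rewrite E; apply/minn_idPr; lia.
rewrite E eqxx addr0 -(sR (i:=D.-1)); last by lia.
move=> <-; ring.
Qed.

Lemma pcs_scale th g : g 0%N != 0 ->
  (forall i, (i < D)%N -> (c i)%:R * g i.-1 + (a i)%:R * g i + (b i)%:R * g i.+1 = th * g i) ->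
  pcs th (fun j => g j / g 0%N).
Proof.
move=> g0 h; split => [|i hi] /=; first by rewrite divff.
by rewrite !mulrA -!mulrDl h.
Qed.


Lemma pm1 s : pcs (-k) s -> forall i, (i <= D.-1)%N -> s i = (-1)^+i.
Proof.
move=> [h0 h].
suff H : forall i, (i <= D.-1)%N -> s i = (-1)^+i /\ s i.-1 = (-1)^+i.-1 by move=> i /H [].
elim => [|i IH] hi; first by rewrite h0 expr0.
have [e1 e2] := IH (ltnW hi).
split; last by rewrite /= e1.
have hiD : (i < D)%N by lia.
have := h i hiD.
rewrite ha0; last by lia.
have hk := sR hiD; rewrite ha0 in hk; last by lia.
have hc : (c i)%:R * s i.-1 = - ((c i)%:R * (-1)^+i).
  case: i {IH hi hiD hk e1 h} e2 => [|i] e2; first by rewrite hc0 !mul0r oppr0.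
  by rewrite e2 /= exprS mulN1r mulrN opprK.
rewrite hc e1 mul0r addr0 => E.
apply: (mulfI (bR hiD)).
rewrite exprS mulN1r mulrN.
rewrite -hk in E.
set x := (-1) ^+ i in E *.
set y := s i.+1 in E *.
have -> : (b i)%:R * y = - ((c i)%:R + 0%:R + (b i)%:R) * x + (c i)%:R * x by rewrite -E; ring.
ring.
Qed.


Lemma part2_core th σ : pcs th σ -> σ D = σ D.-1 -> tight_pair D a b c th (-k).
Proof.
move=> hσ σD; have [ρ hρ] := pcs_exists (-k).
have pρ := pm1 hρ.
exists σ, ρ, (-th); split => //.
split; first by rewrite hσ.1 hρ.1 mulr1.
move=> i hi.
have Hs := hσ.2 i hi; have Hr := hρ.2 i hi.
have hc : (c i)%:R * (σ i.-1 * ρ i.-1) = - ((c i)%:R * σ i.-1 * (-1)^+i).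
  case: i hi {Hs Hr} => [|i] hi; first by rewrite hc0 !mul0r oppr0.
  rewrite /= (pρ i) ?exprS; [ring | lia].
rewrite hc.
rewrite (pρ i) in Hr *; last lia.
case: (ltnP i.+1 D) => hi2.
  rewrite ha0 in Hs Hr *; last lia.
  rewrite (pρ i.+1) ?exprS; last lia.
  have -> : -th * (σ i * (-1)^+i) = -(th * σ i) * (-1)^+i by ring.
  rewrite -Hs; ring.
have Ei : i = D.-1 by lia.
have Ei1 : i.+1 = D by lia.
have hρ1 : ρ i.-1 = - (-1)^+i.
  rewrite (pρ i.-1); last lia.
  have -> : i = i.-1.+1 by lia.
  by rewrite exprS /= mulN1r opprK.
rewrite hρ1 in Hr.
rewrite Ei1 σD -Ei in Hs *.
have -> : -th * (σ i * (-1)^+i) = -(th * σ i) * (-1)^+i by ring.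
rewrite -Hs.
have hbr : (b i)%:R * ρ D = -k * (-1)^+i - (c i)%:R * (- (-1)^+i) - (a i)%:R * (-1)^+i.
  by rewrite -Ei1 -Hr; ring.
have -> : (b i)%:R * (σ i * ρ D) = σ i * ((b i)%:R * ρ D) by ring.
rewrite hbr -(sR hi); ring.
Qed.


Lemma part2 th : eigenvalue (Mtri R D b c) th -> tight_pair D a b c th (-k).
Proof.
rewrite -eig_tr => /eigenvalueP [v hv v0].
pose f := fun j : nat => if @insub _ _ 'I_D j is Some o then v 0 o else 0.
have vf : v = \row_(j < D) f j by apply/rowP => j; rewrite mxE /f valK.
have hr : reig th f by apply/reig_row; rewrite -vf.
have f0 : f 0%N != 0.
  apply/negP => /eqP f0; move/negP: v0; apply; rewrite vf; apply/eqP/rowP => j.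
  have Z : forall i, (i < D)%N -> f i = 0 /\ f i.-1 = 0.
    elim => [|i IH] hi; first by rewrite f0.
    have [z1 z2] := IH (ltnW hi).
    split => //.
    have := hr i (ltnW hi); rewrite z1 z2 ifF; last by apply/eqP; lia.
    rewrite hi !mulr0 !add0r => /eqP; rewrite mulf_eq0 (negbTE (bR (ltnW hi))) /=.
    by move/eqP.
  by rewrite !mxE (Z j (ltn_ord j)).1.
pose g := fun j => f (minn j D.-1).
have g0 : g 0%N != 0 by rewrite /g min0n.
have hs' := pcs_scale g0 (reig_pcs hr).
apply: (part2_core hs') => /=.
rewrite /g; congr (f _ / _); rewrite minnn; apply/minn_idPr; lia.
Qed.


Lemma part3_core th' σ ρ η : pcs (-k) σ -> pcs th' ρ ->
  pcs η (fun i => σ i * ρ i) -> eigenvalue (Mtri R D b c) th'.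
Proof.
move=> hσ hρ hτ.
have pσ := pm1 hσ.
have D0 : (0 < D)%N by lia.
have a0 : a 0%N = 0%N by apply: ha0; lia.
have Eη : η = - th'.
  have := hτ.2 0%N D0; have := hρ.2 0%N D0.
  rewrite /= hc0 a0 hσ.1 hρ.1 (pσ 1%N); last lia.
  rewrite !mul0r !add0r ?mulr1 ?mul1r expr1 => <- <-; ring.
have hi : (D.-1 < D)%N by lia.
have Es := hσ.2 _ hi; have Er := hρ.2 _ hi; have Et := hτ.2 _ hi.
rewrite /= in Et.
have Ei : D.-1 = D.-1.-1.+1 by lia.
have s1 : σ D.-1 = - (-1)^+(D.-1.-1).
  by rewrite (pσ D.-1) // {1}Ei exprS mulN1r.
have s2 : σ D.-1.-1 = (-1)^+(D.-1.-1) by rewrite (pσ D.-1.-1) //; lia.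
have ED : D.-1.+1 = D by lia.
rewrite ED s1 s2 in Es Et; rewrite ED in Er; rewrite Eη in Et.
set e := (-1)^+(D.-1.-1) in Es Et.
set C := (c D.-1)%:R in Es Et Er.
set A := (a D.-1)%:R in Es Et Er.
set B := (b D.-1)%:R in Es Et Er.
have K : C + A + B = k by rewrite /C /A /B sR.
set sD := σ D in Es Et. set rD := ρ D in Et Er.
set r1 := ρ D.-1 in Et Er. set r2 := ρ D.-1.-1 in Et Er.
have Z : 2%:R * A * e * (rD - r1) = 0.
  have -> : 2%:R * A * e * (rD - r1) =
    (C * (e * r2) + A * (- e * r1) + B * (sD * rD) - - th' * (- e * r1))
    - e * (C * r2 + A * r1 + B * rD - th' * r1)
    - rD * (C * e + A * - e + B * sD - - k * - e)
    - e * rD * (k - (C + A + B)) by ring.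
  by rewrite Et Er Es K !subrr !mulr0 !subr0.
have rDr1 : ρ D = ρ D.-1.
  apply/eqP; rewrite -subr_eq0 -/rD -/r1; move/eqP: Z; rewrite !mulf_eq0 => /orP [/orP [/orP [] | ] | ] //.
  - by rewrite pnatr_eq0.
  - by rewrite /A pnatr_eq0 => /eqP.
  - by rewrite /e expf_eq0 oppr_eq0 oner_eq0 andbF.
apply: (eig_of_reig (pcs_reig hρ rDr1)).
by rewrite hρ.1 oner_eq0.
Qed.


Lemma part3 th th' : tight_pair D a b c th th' ->
  [\/ th = k, th' = k, th = - k /\ eigenvalue (Mtri R D b c) th'
    | th' = - k /\ eigenvalue (Mtri R D b c) th].
Proof.
move=> [σ [ρ [η [hσ hρ hτ]]]].
have D0 : (0 < D)%N by lia.
have D1 : (1 < D)%N by lia.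
have a0 : a 0%N = 0%N by apply: ha0; lia.
have a1 : a 1%N = 0%N by apply: ha0; lia.
have S1 := hσ.2 0%N D0; have R1 := hρ.2 0%N D0; have T1 := hτ.2 0%N D0.
have S2 := hσ.2 1%N D1; have R2 := hρ.2 1%N D1; have T2 := hτ.2 1%N D1.
rewrite /= hc0 a0 hσ.1 hρ.1 !mul0r !add0r ?mulr1 in S1 R1 T1.
rewrite /= a1 hσ.1 hρ.1 !mul0r !addr0 ?mulr1 in S2 R2 T2.
have K := sR D1; rewrite a1 addr0 in K.
set C := (c 1%N)%:R in S2 R2 T2 K.
set B := (b 1%N)%:R in S2 R2 T2 K.
set s1 := σ 1%N in S1 S2 T1 T2. set r1 := ρ 1%N in R1 R2 T1 T2.
set s2 := σ 2%N in S2 T2. set r2 := ρ 2%N in R2 T2.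
have bs : B * s2 = th * s1 - C by rewrite -S2; ring.
have br : B * r2 = th' * r1 - C by rewrite -R2; ring.
have T2' : C * B + (B * s2) * (B * r2) = B * (η * (s1 * r1)) by rewrite -T2; ring.
rewrite bs br -S1 -R1 -T1 -K in T2'.
have Z : C * (C + B) * ((1 - s1 ^+ 2) * (1 - r1 ^+ 2)) = 0.
  move/eqP: T2'; rewrite -subr_eq0 => /eqP T3.
  by apply: (etrans _ T3); ring.
have Ck : C * (C + B) != 0.
  by rewrite mulf_neq0 // ?K ?bR // /C pnatr_eq0; apply/eqP.
move/eqP: Z; rewrite mulf_eq0 (negbTE Ck) /= mulf_eq0 !subr_eq0 => /orP [] /eqP.
  move/esym/eqP; rewrite sqrf_eq1 => /orP [] /eqP e.
    by apply: Or41; rewrite -S1 e mulr1.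
  apply: Or43; split; first by rewrite -S1 e mulrN1.
  apply: (part3_core _ hρ hτ).
  by have := hσ; rewrite -S1 e mulrN1.
move/esym/eqP; rewrite sqrf_eq1 => /orP [] /eqP e.
  by apply: Or42; rewrite -R1 e mulr1.
apply: Or44; split; first by rewrite -R1 e mulrN1.
apply: (part3_core (σ := ρ) (ρ := σ) (η := η) _ hσ).
  by have := hρ; rewrite -R1 e mulrN1.
by apply: pcs_ext hτ _ => i; rewrite mulrC.
Qed.

End Alg.

Unset Implicit Arguments. Set Strict Implicit.

Theorem theorem9p4 (R : realType) (T : finType) (adj : rel T) (D : nat)
    (a b c : nat -> nat) :
  distance_regular adj D a b c ->
  (3 <= D)%N ->
  (forall i, (i <= D - 2)%N -> a i = 0%N) ->
  a (D.-1) <> 0%N ->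
  [/\ (forall theta : R, tight_pair D a b c theta (b 0%N)%:R),
      (forall theta : R, eigenvalue (Mtri R D b c) theta ->
          tight_pair D a b c theta (- (b 0%N)%:R)) &
      (forall theta theta' : R, tight_pair D a b c theta theta' ->
          [\/ theta = (b 0%N)%:R, theta' = (b 0%N)%:R,
              theta = - (b 0%N)%:R /\ eigenvalue (Mtri R D b c) theta'
            | theta' = - (b 0%N)%:R /\ eigenvalue (Mtri R D b c) theta])].
Proof.
move=> H hD ha0 haD.
have hc0 := drg_c0 H.
have hc1 : c 1%N <> 0%N by apply: (drg_c1 H); lia.
have hb := drg_bpos H.
have hs : forall i, (i < D)%N -> (c i + a i + b i = b 0)%N.
  by move=> i hi; apply: (drg_sum H); lia.
split.
- by move=> th; apply: part1.
- by move=> th; apply: part2.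
- by move=> th th'; apply: part3.
Qed.
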